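(* Let $m,\delta>1$ be integers, $n=m\delta$, and let $V^1,V^2$ be two copies of $\mathbb{F}_2^n$, each written as $V^i=V^i_1\times\cdots\times V^i_\delta$ with $V^i_j\cong\mathbb{F}_2^m$ (brick $V^i_j$ consisting of coordinates $(j-1)m,\dots,jm-1$). Let $\gamma\in\mathrm{Sym}(\mathbb{F}_2^n)$ be a parallel S-Box, $(x_1,\dots,x_\delta)\gamma=(x_1\gamma_1,\dots,x_\delta\gamma_\delta)$ with $\gamma_j\in\mathrm{Sym}(\mathbb{F}_2^m)$ and $0\gamma_j\neq0$; let $\lambda$ be an invertible linear map of $\mathbb{F}_2^n$ which is non-type-preserving, and put $\rho=\gamma\lambda$. Let $V=V^1\times V^2$. For $k=(k_1,k_2)\in V$ let $\sigma_k:(x_1,x_2)\mapsto(x_1\boxplus k_1,x_2\boxplus k_2)$, where $\boxplus$ is addition modulo $2^n$ on each component, and let $\mathcal{P}:V\to V$, $(x_1,x_2)\mapsto(x_2,\,x_1\oplus x_2\rho)$, where $\oplus$ is bitwise XOR. Let $\Gamma_\infty=\langle \sigma_k\,\mathcal{P}\,\sigma_h : k,h\in V\rangle\le\mathrm{Sym}(V)$. Then $\Gamma_\infty$ is primitive on $V$.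
   Context: A vector $a=(a_0,\dots,a_{n-1})\in\mathbb{F}_2^n$ is identified with the integer $\sum_i a_i2^i$, and $\boxplus$ is addition of these integers modulo $2^n$. Maps act on the right and are composed left to right. Type of a subset: for $D\subseteq\mathbb{F}_2^n$, its type is the sequence of $\delta$ symbols whose $j$-th entry is ''white'' if the projection of $D$ onto the $j$-th brick has size $1$, ''ruled'' if it has size $t$ with $1<t<2^m$, and ''black'' if it is the whole brick. Non-type-preserving: an invertible linear map $\lambda$ of $\mathbb{F}_2^n$ is non-type-preserving if for every subset $D\subseteq\mathbb{F}_2^n$ whose type is (first $a$ entries white, then $b$ ruled, then $c$ black) with $a,c\ge0$, $b\in\{0,1\}$, $a+b+c=\delta$, not all-white and not all-black, the type of $D\lambda$ differs from the type of $D$. A group $G\le\mathrm{Sym}(V)$ is primitive if it is transitive and preserves no partition of $V$ other than $\{V\}$ and the partition into singletons. *)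

(* Defs.v *)
From HB Require Import structures.
From mathcomp Require Import all_boot all_order all_algebra all_fingroup.
From mathcomp Require Import primitive_action.

Set Implicit Arguments.
Unset Strict Implicit.
Unset Printing Implicit Defensive.

Import GRing.Theory.
Local Open Scope ring_scope.

Notation vecF2 n := 'rV['F_2]_n.

Definition int_of n (x : vecF2 n) : nat := (\sum_(i < n) (x ord0 i != 0%R) * 2 ^ i)%N.

Definition vec_of n (a : nat) : vecF2 n := \row_(i < n) ((odd (a %/ 2 ^ i))%:R : 'F_2).

Definition boxplus n (x y : vecF2 n) : vecF2 n := vec_of n ((int_of x + int_of y) %% 2 ^ n).

Lemma int_of_vec n a : int_of (vec_of n a) = (a %% 2 ^ n)%N.
Proof.
rewrite /int_of; elim: n => [|n IH]; first by rewrite big_ord0 expn0 modn1.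
rewrite big_ord_recr /=.
have -> : (\sum_(i < n) ((vec_of n.+1 a) ord0 (widen_ord (leqnSn n) i) != 0%R) * 2 ^ i)%N
        = (\sum_(i < n) ((vec_of n a) ord0 i != 0%R) * 2 ^ i)%N.
  by apply: eq_bigr => i _; rewrite !mxE.
rewrite IH mxE.
have -> : ((odd (a %/ 2 ^ n))%:R != 0 :> 'F_2) = odd (a %/ 2 ^ n).
  by case: odd => //=; rewrite oner_eq0.
rewrite expnS (divn_eq (a %% (2 * 2 ^ n)) (2 ^ n)) -modn_divl modn2.
rewrite modn_dvdm ?dvdn_mull // addnC.
by [].
Qed.

Lemma card_vecF2 n : #|{: vecF2 n}| = (2 ^ n)%N.
Proof. by rewrite card_mx card_Fp // mul1n. Qed.

Lemma vec_of_int n (x : vecF2 n) : vec_of n (int_of x) = x /\ (int_of x < 2 ^ n)%N.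
Proof.
pose f := fun a : 'I_(2 ^ n) => vec_of n a.
have injf : injective f.
  move=> a b /(congr1 (@int_of n)); rewrite !int_of_vec !modn_small //.
  by move/val_inj.
have : x \in codom f.
  by apply: (inj_card_onto injf); rewrite card_ord card_vecF2.
case/codomP=> a ->; rewrite /f int_of_vec modn_small //.
Qed.

Lemma boxplus_inj n (k : vecF2 n) : injective (fun x => boxplus x k).
Proof.
move=> x y /= /(congr1 (@int_of n)); rewrite !int_of_vec !modn_mod.
move/eqP; rewrite eqn_modDr; move/eqP.
have [ex lx] := vec_of_int x; have [ey ly] := vec_of_int y.
by rewrite !modn_small // => e; rewrite -ex -ey e.
Qed.

(* A vector of F_2^(delta*m) is split into delta bricks of size m: brick j
   (j : 'I_delta) consists of coordinates j*m, ..., j*m + m - 1.  Via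
   vec_mx, brick j is the j-th row of the delta x m matrix vec_mx x. *)
Definition brick (delta m : nat) (x : vecF2 (delta * m)) (j : 'I_delta) : vecF2 m :=
  row j (vec_mx x).

Definition parallel_sbox (delta m : nat) (g : 'I_delta -> {perm vecF2 m})
    (x : vecF2 (delta * m)) : vecF2 (delta * m) :=
  mxvec (\matrix_(j < delta, i < m) (g j (brick x j) 0 i)).

Inductive colour := White | Ruled | Black.

Definition has_type (delta m : nat) (D : {set vecF2 (delta * m)})
    (t : 'I_delta -> colour) : Prop :=
  forall j : 'I_delta,
    let s := #|[set brick x j | x in D]| in
    match t j with
    | White => s = 1%N
    | Ruled => (1 < s < 2 ^ m)%N
    | Black => s = (2 ^ m)%N
    end.

Definition std_type (delta a b : nat) (j : 'I_delta) : colour :=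
  if (j < a)%N then White else if (j < a + b)%N then Ruled else Black.
Arguments std_type : clear implicits.

Definition image_lin n (L : 'M['F_2]_n) (D : {set vecF2 n}) : {set vecF2 n} :=
  [set x *m L | x in D].

Definition non_type_preserving (delta m : nat) (L : 'M['F_2]_(delta * m)) : Prop :=
  forall (a b c : nat) (D : {set vecF2 (delta * m)}),
    (b <= 1)%N -> (a + b + c)%N = delta -> a <> delta -> c <> delta ->
    has_type D (std_type delta a b) ->
    ~ has_type (image_lin L D) (std_type delta a b).

Section Gamma.
Variables (delta m : nat).
Local Notation n := (delta * m)%N.
Local Notation Vn := (vecF2 n).
Local Notation V := (Vn * Vn)%type.

Definition sigma_fun (k : V) (x : V) : V := (boxplus x.1 k.1, boxplus x.2 k.2).

Lemma sigma_inj k : injective (sigma_fun k).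
Proof.
move=> [x1 x2] [y1 y2] [/boxplus_inj e1 /boxplus_inj e2].
by rewrite e1 e2.
Qed.

Definition sigma (k : V) : {perm V} := perm (@sigma_inj k).

Definition P_fun (rho : Vn -> Vn) (x : V) : V := (x.2, x.1 + rho x.2).

Lemma P_inj rho : injective (P_fun rho).
Proof.
move=> [x1 x2] [y1 y2] [e2 e1] /=; subst y2.
by move/addIr: e1 => ->.
Qed.

Definition Pperm (rho : Vn -> Vn) : {perm V} := perm (@P_inj rho).

(* Gamma_infty = < sigma_k P sigma_h : k, h in V >; maps act on the right and
   compose left to right, which is MathComp's convention for {perm _}:
   (s * t) x = t (s x). *)
Definition Gamma_infty (rho : Vn -> Vn) : {group {perm V}} :=
  <<[set (sigma k * Pperm rho * sigma h)%g | k in [set: V], h in [set: V]]>>%G.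

End Gamma.

(* Main.v *)
Require Import Defs.
From HB Require Import structures.
From mathcomp Require Import all_boot all_order all_algebra all_fingroup.
From mathcomp Require Import primitive_action.
From mathcomp Require Import zify.
From Stdlib Require Import Lia Classical.
Set Implicit Arguments. Unset Strict Implicit. Unset Printing Implicit Defensive.
Import GRing.Theory.


Lemma modn_pow2S A k : A %% 2 ^ k.+1 = A %% 2 ^ k + 2 ^ k * odd (A %/ 2 ^ k).
Proof.
rewrite expnS (divn_eq (A %% (2 * 2 ^ k)) (2 ^ k)) -modn_divl modn2.
by rewrite modn_dvdm ?dvdn_mull // addnC mulnC.
Qed.

Lemma mod_bits A B k :
  A %% 2 ^ k = B %% 2 ^ k <-> (forall i, i < k -> odd (A %/ 2 ^ i) = odd (B %/ 2 ^ i)).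
Proof.
elim: k => [|k IH]; first by rewrite expn0 !modn1.
rewrite !modn_pow2S; split.
  move=> e.
  have e1 : A %% 2 ^ k = B %% 2 ^ k.
    by rewrite -(modn_dvdm _ (dvdn_exp2l 2 (leqnSn k))) -[RHS](modn_dvdm _ (dvdn_exp2l 2 (leqnSn k))) !modn_pow2S e.
  move: e; rewrite e1 => /addnI /eqP; rewrite eqn_mul2l expn_eq0 /= => /eqP e2.
  move=> i; rewrite ltnS leq_eqVlt => /orP[/eqP -> | ik].
    by case: (odd _) e2; case: (odd _).
  exact: (proj1 IH e1 i ik).
move=> H; rewrite (proj2 IH) ?H // => i ik; apply: H; exact: ltnW.
Qed.

Lemma F2_natr_inj (b c : bool) : ((b%:R : 'F_2) = c%:R)%R -> b = c.
Proof. by case: b; case: c. Qed.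

Lemma F2_addxx n (v : 'rV['F_2]_n) : (v + v = 0)%R.
Proof. by apply/rowP => i; rewrite !mxE; apply: (@addrr_pchar2 _ (pchar_Fp (erefl : prime 2))). Qed.

Lemma F2_add1 (b : bool) : ((b%:R : 'F_2) + 1 = (~~ b)%:R)%R.
Proof. case: b => //=; first by apply/eqP. by rewrite add0r. Qed.

Lemma vec_bit n (x : 'rV['F_2]_n) i : x ord0 i = ((odd (int_of x %/ 2 ^ i))%:R)%R.
Proof. by have [e _] := vec_of_int x; rewrite -{1}e mxE. Qed.

Lemma int_of_inj n : injective (@int_of n).
Proof.
move=> x y e; have [ex _] := vec_of_int x; have [ey _] := vec_of_int y.
by rewrite -ex -ey e.
Qed.

Lemma int_of_lt n (x : 'rV['F_2]_n) : int_of x < 2 ^ n.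
Proof. by have [_ ] := vec_of_int x. Qed.

Lemma vec_of_eq n a b : vec_of n a = vec_of n b <-> a %% 2 ^ n = b %% 2 ^ n.
Proof.
split=> [e|e]; first by rewrite -!int_of_vec e.
by apply: int_of_inj; rewrite !int_of_vec.
Qed.

Lemma vec_of_mod n a : vec_of n (a %% 2 ^ n) = vec_of n a.
Proof. by apply/vec_of_eq; rewrite modn_mod. Qed.

Lemma vec_of_int' n (x : 'rV['F_2]_n) : vec_of n (int_of x) = x.
Proof. by have [] := vec_of_int x. Qed.

Lemma boxplus_vec n a b : boxplus (vec_of n a) (vec_of n b) = vec_of n (a + b).
Proof. by rewrite /boxplus !int_of_vec vec_of_mod; apply/vec_of_eq; rewrite modnDm. Qed.

Lemma vec_of0 n : vec_of n 0 = 0%R.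
Proof. by apply/rowP => i; rewrite !mxE div0n. Qed.

Lemma int_of0 n : int_of (0 : 'rV['F_2]_n)%R = 0.
Proof. by rewrite -(vec_of0 n) int_of_vec mod0n. Qed.

Lemma vec_of_N n : vec_of n (2 ^ n) = 0%R.
Proof. by rewrite -vec_of_mod modnn vec_of0. Qed.

Lemma xor_top n (x : 'rV['F_2]_n.+1) :
  (x + vec_of n.+1 (2 ^ n))%R = vec_of n.+1 (int_of x + 2 ^ n).
Proof.
apply/rowP => i; rewrite !mxE vec_bit.
set A := int_of x.
have [ilt|ieq] : i < n \/ val i = n.
  by case: i => i /=; rewrite ltnS leq_eqVlt => /orP[/eqP->|]; [right|left].
  have -> : 2 ^ n = 2 ^ (n - i).-1.+1 * 2 ^ i.
    by rewrite prednK ?subn_gt0 // -expnD subnK // ltnW.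
  rewrite divnDMl ?expn_gt0 // mulnK ?expn_gt0 // oddD oddX /=.
  by rewrite addbF addr0.
rewrite ieq divnn expn_gt0 /= divnDr ?dvdnn // divnn expn_gt0 /= oddD /= addbT.
by rewrite F2_add1.
Qed.

Lemma index_allpairs (T1 T2 : eqType) (s1 : seq T1) (s2 : seq T2) x1 x2 :
  x1 \in s1 -> x2 \in s2 ->
  index (x1, x2) [seq (a, b) | a <- s1, b <- s2] = index x1 s1 * size s2 + index x2 s2.
Proof.
move=> in1 in2; elim: s1 in1 => //= a s1 IH.
rewrite inE; case: (eqVneq x1 a) => [->|ne] /=.
  rewrite mul0n add0n index_cat.
  have -> : (a, x2) \in [seq (a, b) | b <- s2] by apply/mapP; exists x2.
  by rewrite index_map //; move=> u v [].
move=> /IH e; rewrite index_cat.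
have -> : (x1, x2) \in [seq (a, b) | b <- s2] = false.
  by apply/negbTE/mapP=> -[b _ [e1 _]]; rewrite e1 eqxx in ne.
by rewrite size_map e mulSn addnA.
Qed.

Lemma val_mxvec_index m n (i : 'I_m) (j : 'I_n) : val (mxvec_index i j) = (i * n + j)%N.
Proof.
rewrite /mxvec_index /= /enum_rank enum_rank_in.unlock insubdK; last first.
  by rewrite cardE [_ \in _]index_mem mem_enum.
rewrite enumT unlock /= /prod_enum.
rewrite index_allpairs ?mem_enum // size_enum_ord.
by rewrite !index_enum_ord.
Qed.





Section Bricks.
Variables (delta m : nat).
Hypothesis hm : 1 < m.
Local Notation n := (delta * m).
Local Notation Vn := (vecF2 (delta * m)).

Definition bcoset (k : nat) (x : Vn) : {set Vn} :=
  [set y | int_of y %% 2 ^ k == int_of x %% 2 ^ k].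

Lemma coset_bits k x y : k <= n ->
  y \in bcoset k x <-> (forall i : 'I_n, i < k -> y ord0 i = x ord0 i).
Proof.
move=> kn; rewrite inE; split.
  move/eqP/mod_bits => H i ik; rewrite !vec_bit H //.
move=> H; apply/eqP/mod_bits => i ik.
have iln : i < n by apply: leq_trans kn.
by apply: F2_natr_inj; rewrite -!(vec_bit _ (Ordinal iln)) H.
Qed.

Lemma brickE (y : Vn) j l : brick y j ord0 l = y ord0 (mxvec_index j l).
Proof. by rewrite /brick !mxE. Qed.

Definition proj k x j := [set brick y j | y in bcoset k x].

Lemma coset_refl k x : x \in bcoset k x.
Proof. by rewrite inE. Qed.

Lemma proj_white k x (j : 'I_delta) : k <= n -> j.+1 * m <= k -> #|proj k x j| = 1.
Proof.
move=> kn jk; have -> : proj k x j = [set brick x j]; last exact: cards1.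
apply/setP => z; rewrite inE; apply/imsetP/eqP => [[y yC ->]|->]; last first.
  by exists x => //; apply: coset_refl.
apply/rowP => l; rewrite !brickE; apply: (proj1 (coset_bits _ _ kn) yC).
rewrite val_mxvec_index; apply: leq_trans jk; rewrite mulSn addnC ltn_add2r.
exact: ltn_ord.
Qed.

Lemma proj_black k x (j : 'I_delta) : k <= j * m -> #|proj k x j| = 2 ^ m.
Proof.
move=> jk; have -> : proj k x j = setT; last by rewrite cardsT card_vecF2.
apply/setP => z; rewrite inE; apply/imsetP.
pose M := (\matrix_(i < delta, l < m) (if i == j then z ord0 l else vec_mx x i l))%R.
exists (mxvec M).
  rewrite inE; apply/eqP/mod_bits => i ik.
  have [iln|] := ltnP i n; last first.
    move=> ni; rewrite !divn_small //.
    - apply: leq_trans (int_of_lt _) _; exact: leq_pexp2l.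
    - apply: leq_trans (int_of_lt _) _; exact: leq_pexp2l.
  apply: F2_natr_inj; rewrite -!(vec_bit _ (Ordinal iln)).
  move: ik; set o := Ordinal iln; have -> : i = val o by [].
  case/mxvec_indexP: o => a b; rewrite val_mxvec_index => ik.
  rewrite mxvecE mxE; case: eqP => [e|_]; last by rewrite mxE.
  move: ik; rewrite e => ik; have := leq_trans ik jk.
  by rewrite -[X in _ < X]addn0 ltn_add2l.
by apply/rowP => l; rewrite brickE mxvecE mxE eqxx.
Qed.

Lemma proj_ruled k x (j : 'I_delta) : k <= n -> j * m < k -> k < j.+1 * m ->
  1 < #|proj k x j| < 2 ^ m.
Proof.
move=> kn jk kj.
have m0 : 0 < m by apply: ltnW.
pose l0 : 'I_m := Ordinal m0.
have m1 : m.-1 < m by rewrite prednK.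
pose l1 : 'I_m := Ordinal m1.
apply/andP; split.
  apply/card_gt1P.
  pose x' := (x + delta_mx ord0 (mxvec_index j l1))%R.
  exists (brick x j), (brick x' j); split.
  - by apply/imsetP; exists x => //; apply: coset_refl.
  - apply/imsetP; exists x' => //; apply/(coset_bits _ _ kn) => i ik.
    rewrite !mxE /=.
    case: eqP => [e|_]; last by rewrite addr0.
    have : (i : nat) = j * m + m.-1 by rewrite e val_mxvec_index.
    move: kj ik (m0); rewrite mulSn; lia.
  - apply/eqP => /rowP /(_ l1); rewrite !brickE !mxE !eqxx /=.
    by move/eqP; rewrite eq_sym -subr_eq0 addrAC subrr add0r oner_eq0.
have -> : 2 ^ m = #|[set: 'rV['F_2]_m]| by rewrite cardsT card_vecF2.
apply: proper_card; rewrite properT.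
apply/eqP => /setP /(_ (brick x j + delta_mx ord0 l0)%R); rewrite inE /proj => /esym.
move/esym/imsetP => [y yC] /rowP /(_ l0); rewrite !brickE !mxE !eqxx /=.
rewrite (proj1 (coset_bits _ _ kn) yC); last by rewrite val_mxvec_index /= addn0.
by move/eqP; rewrite -subr_eq0 addrAC subrr add0r oner_eq0.
Qed.


Lemma coset_type k x : 0 < k -> k < n ->
  has_type (bcoset k x) (std_type delta (k %/ m) (k %% m != 0)).
Proof.
move=> k0 kn j; rewrite /std_type -/(proj k x j).
have m0 : 0 < m by apply: ltnW.
have ekm := divn_eq k m; have rm : k %% m < m by rewrite ltn_mod.
set a := k %/ m in ekm *; set r := k %% m in ekm rm *.
case: ifP => ja.
  apply: proj_white; first exact: ltnW.
  by rewrite -leq_divRL.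
have aj : a <= j by rewrite leqNgt ja.
have amj : a * m <= j * m by rewrite leq_mul2r aj orbT.
case: ifP => jb.
  have ej : (j : nat) = a by move: jb aj; case: (r != 0); rewrite /= ?addn0 ?addn1; lia.
  have r0 : r != 0 by move: jb aj; case: (r != 0); rewrite /= ?addn0 ?addn1 //; lia.
  apply: proj_ruled; rewrite ?ej; first exact: ltnW.
    by move: r0; rewrite ekm; lia.
  by rewrite ekm mulSn; lia.
apply: proj_black.
case: (eqVneq r 0) jb => [r0|rn0] jb.
  by rewrite ekm r0 addn0.
have a1j : a.+1 <= j by move: jb => /= /negbT; rewrite addn1 -leqNgt.
have : a.+1 * m <= j * m by rewrite leq_mul2r a1j orbT.
by rewrite ekm mulSn; lia.
Qed.

Lemma brick_sbox (g : 'I_delta -> {perm vecF2 m}) (x : Vn) j :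
  brick (parallel_sbox g x) j = g j (brick x j).
Proof. by apply/rowP => l; rewrite /brick /parallel_sbox mxvecK !mxE. Qed.

Lemma sbox_type (g : 'I_delta -> {perm vecF2 m}) (D : {set Vn}) t :
  has_type D t -> has_type (parallel_sbox g @: D) t.
Proof.
move=> H j; have := H j; rewrite /=.
suff -> : [set brick x j | x in parallel_sbox g @: D] = g j @: [set brick x j | x in D].
  by rewrite (card_imset _ (@perm_inj _ (g j))).
rewrite -imset_comp -imset_comp; apply: eq_imset => y /=.
by rewrite brick_sbox.
Qed.

End Bricks.



Lemma xor_top' n (x : 'rV['F_2]_n) : 0 < n ->
  (x + vec_of n (2 ^ n.-1))%R = vec_of n (int_of x + 2 ^ n.-1).
Proof. by case: n x => // n x _; exact: xor_top. Qed.

Lemma negK N a : 0 < N -> (a + (N - a %% N)) %% N = 0.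
Proof.
move=> N0; rewrite {1}(divn_eq a N) -addnA subnKC; last by apply: ltnW; rewrite ltn_mod.
by rewrite -mulSnr modnMl.
Qed.

Lemma negK_eq N a b : 0 < N -> (a + (N - b %% N)) %% N = 0 -> a %% N = b %% N.
Proof.
move=> N0; rewrite -modnDml => e.
have ha : a %% N < N by rewrite ltn_mod.
have hb : b %% N < N by rewrite ltn_mod.
move: e; set s := a %% N + (N - b %% N) => e.
have s0 : 0 < s by rewrite /s; lia.
have s2 : s < 2 * N by rewrite /s; lia.
have eq : s = N.
  have := divn_eq s N; rewrite e addn0 => es.
  have q1 : s %/ N < 2 by rewrite ltn_divLR // mulnC.
  have q0 : 0 < s %/ N by case: (s %/ N) es s0 => // ->.
  have : s %/ N = 1 by lia.
  by move=> q; rewrite es q mul1n.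
by move: eq; rewrite /s; lia.
Qed.

Section Main.
Variables (m delta : nat).
Hypotheses (hm : 1 < m) (hdelta : 1 < delta).
Variable g : 'I_delta -> {perm 'rV['F_2]_m}.
Variable L : 'M['F_2]_(delta * m).
Hypothesis hLinv : L \in unitmx.
Hypothesis hLntp : non_type_preserving L.

Local Notation n := (delta * m).
Local Notation N := (2 ^ (delta * m)).
Local Notation Vn := (vecF2 (delta * m)).
Local Notation V := (Vn * Vn)%type.

Definition rho (x : Vn) : Vn := (parallel_sbox g x *m L)%R.

Lemma n_gt1 : 1 < n.
Proof. by rewrite -[1]muln1 ltn_mul // ltnW. Qed.

Lemma N_gt0 : 0 < N.
Proof. by rewrite expn_gt0. Qed.

Lemma rho_inj : injective rho.
Proof.
move=> x y /(congr1 (fun z => z *m invmx L)%R); rewrite /rho !mulmxK // => e.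
apply: (can_inj vec_mxK); apply/row_matrixP => j.
have := congr1 (fun z => brick z j) e; rewrite /= !brick_sbox => /perm_inj.
by rewrite /brick.
Qed.

Definition rhop : {perm Vn} := perm rho_inj.
Definition z0 : Vn := (rhop^-1)%g 0%R.
Lemma rho_z0 : rho z0 = 0%R.
Proof. by have := permKV rhop 0%R; rewrite /rhop permE. Qed.

Definition Gam := @Gamma_infty delta m rho.

Lemma sigma0 : sigma ((0%R, 0%R) : V) = 1%g.
Proof.
apply/permP => x; rewrite permE perm1 /sigma_fun /=.
have H : forall y : Vn, boxplus y 0%R = y.
  by move=> y; rewrite -{1}(vec_of_int' y) -(vec_of0 n) boxplus_vec addn0 vec_of_int'.
by rewrite !H; case: x.
Qed.

Lemma gen_in k h : (sigma k * Pperm rho * sigma h)%g \in Gam.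
Proof.
apply: mem_gen; apply/imset2P; exists k h => //.
Qed.

Lemma P_in : Pperm rho \in Gam.
Proof. by have := gen_in (0%R, 0%R) (0%R, 0%R); rewrite sigma0 mul1g mulg1. Qed.

Lemma sigma_in k : sigma k \in Gam.
Proof.
have -> : sigma k = ((sigma k * Pperm rho * 1) * (Pperm rho)^-1)%g by rewrite mulg1 mulgK.
by rewrite groupM ?groupV ?P_in // -sigma0 gen_in.
Qed.

Definition Pinv_fun (y : V) : V := (y.2 + rho y.1, y.1)%R.

Lemma Pinv_in : forall y, ((Pperm rho)^-1)%g y = Pinv_fun y.
Proof.
move=> y; apply: (@perm_inj _ (Pperm rho)); rewrite permKV permE /P_fun /Pinv_fun /=.
by case: y => y1 y2 /=; rewrite -addrA F2_addxx addr0.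
Qed.


Variable Q : {set {set V}}.
Hypothesis hQp : partition Q [set: V].
Hypothesis hQa : [acts Gam, on Q | 'P^*].

Definition R (x y : V) := pblock Q x = pblock Q y.

Lemma pblock_act a x : a \in Gam -> pblock Q (a x) = ('P^*)%act (pblock Q x) a.
Proof.
move=> Ga; have [/eqP cov tI _] := and3P hQp.
have xQ : x \in cover Q by rewrite cov inE.
apply: def_pblock => //.
  by rewrite (actsP hQa) // pblock_mem.
by rewrite -[a x]/(aperm x a) mem_setact // mem_pblock.
Qed.

Lemma R_act a x y : a \in Gam -> R x y -> R (a x) (a y).
Proof. by move=> Ga; rewrite /R !pblock_act // => ->. Qed.

Lemma R_trans y x z : R x y -> R y z -> R x z.
Proof. by rewrite /R => -> ->. Qed.
Lemma R_sym x y : R x y -> R y x.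
Proof. by rewrite /R => ->. Qed.

Lemma R_P x y : R x y -> R (P_fun rho x) (P_fun rho y).
Proof. by move/(R_act P_in); rewrite !permE. Qed.

Lemma R_Pinv x y : R x y -> R (Pinv_fun x) (Pinv_fun y).
Proof. by move/(R_act (groupVr P_in)); rewrite !Pinv_in. Qed.

Definition E a b : V := (vec_of n a, vec_of n b).

Lemma E_eq a b a' b' : a %% N = a' %% N -> b %% N = b' %% N -> E a b = E a' b'.
Proof. by move=> e1 e2; rewrite /E (proj2 (vec_of_eq _ _ _) e1) (proj2 (vec_of_eq _ _ _) e2). Qed.

Lemma E_mod a b : E (a %% N) (b %% N) = E a b.
Proof. by apply: E_eq; rewrite modn_mod. Qed.

Lemma vecE (x : V) : x = E (int_of x.1) (int_of x.2).
Proof. by case: x => x1 x2; rewrite /E !vec_of_int'. Qed.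

Lemma R_shift a b a' b' c d :
  R (E a b) (E a' b') -> R (E (a + c) (b + d)) (E (a' + c) (b' + d)).
Proof.
move/(R_act (sigma_in (E c d))); rewrite !permE /sigma_fun /E /=.
by rewrite !boxplus_vec.
Qed.

Definition inU a b := R (E a b) (E 0 0).
Definition inK a := inU 0 a.

Lemma inU_mod a b : inU (a %% N) (b %% N) <-> inU a b.
Proof. by rewrite /inU E_mod. Qed.

Lemma F1 a b a' b' : R (E a b) (E a' b') -> inU (a + (N - a' %% N)) (b + (N - b' %% N)).
Proof.
move/(R_shift (N - a' %% N) (N - b' %% N)); rewrite /inU.
by rewrite -[E (a' + _) _]E_mod !negK ?N_gt0 // E_mod.
Qed.

Lemma F2 a b c d : inU c d -> R (E (a + c) (b + d)) (E a b).
Proof.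
by move/(R_shift a b); rewrite !add0n [c + a]addnC [d + b]addnC.
Qed.

Lemma inU_add a b c d : inU a b -> inU c d -> inU (a + c) (b + d).
Proof.
move=> h1 h2; apply: (R_trans (y := E c d)); last exact: h2.
by rewrite [a + c]addnC [b + d]addnC; apply: F2.
Qed.

Lemma inU_cancel a b c d : inU a b -> inU (a + c) (b + d) -> inU c d.
Proof.
move=> h1 h2; apply: (R_trans (y := E (a + c) (b + d))); last exact: h2.
by apply: R_sym; rewrite [a + c]addnC [b + d]addnC; apply: F2.
Qed.

Lemma inU0 : inU 0 0.
Proof. by []. Qed.

Lemma inU_mul t a b : inU a b -> inU (t * a) (t * b).
Proof.
move=> h; elim: t => [|t IH]; first by rewrite !mul0n.
by rewrite !mulSn; apply: inU_add.
Qed.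


Local Notation h := (2 ^ (delta * m).-1).
Local Notation hv := (vec_of (delta * m) (2 ^ (delta * m).-1)).

Lemma N_hh : N = h + h.
Proof. by rewrite addnn -mul2n -expnS prednK // ltnW // n_gt1. Qed.

Lemma h_lt : h < N.
Proof. by rewrite N_hh -{1}[h]addn0 ltn_add2l expn_gt0. Qed.

Lemma h_mod : h %% N = h.
Proof. by rewrite modn_small // h_lt. Qed.

Lemma hv_neq0 : hv != 0%R.
Proof.
apply/eqP => /(congr1 (@int_of _)); rewrite int_of_vec int_of0 h_mod.
by move/eqP; rewrite expn_eq0.
Qed.

Lemma half_cases c : (2 * c) %% N = 0 -> c %% N = 0 \/ c %% N = h.
Proof.
rewrite -modnMmr N_hh => e.
have cl : c %% (h + h) < h + h by rewrite ltn_mod addn_gt0 expn_gt0.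
move: e cl; set c' := c %% (h + h) => e cl.
have := divn_eq (2 * c') (h + h); rewrite e addn0 => es.
have q2 : (2 * c') %/ (h + h) < 2 by rewrite ltn_divLR ?addn_gt0 ?expn_gt0 //; lia.
move: es q2; set q := (2 * c') %/ (h + h) => es q2.
have : q = 0 \/ q = 1 by lia.
by case=> qe; rewrite qe in es; lia.
Qed.

Lemma vec_r0h : vec_of n (int_of (rho 0%R) + h) = (rho 0%R + hv)%R.
Proof. by rewrite xor_top' // ltnW // n_gt1. Qed.

Lemma P_r0h : P_fun rho (E (int_of (rho 0%R) + h) 0) = E 0 h.
Proof.
rewrite /P_fun /E /= vec_r0h vec_of0.
by rewrite addrAC F2_addxx add0r.
Qed.

Lemma caseA : inU h 0 -> inK h.
Proof.
move=> hu; have := F2 (int_of (rho 0%R)) 0 hu; rewrite addn0 => /R_P.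
rewrite P_r0h /P_fun /E /= vec_of0 vec_of_int' F2_addxx -(vec_of0 n).
by [].
Qed.

Lemma caseB : inU h h -> exists a, inK a /\ a %% N != 0.
Proof.
move=> hu; set r0 := int_of (rho 0%R).
have R1 := F2 (r0 + h) 0 hu; move/R_P: R1.
rewrite add0n P_r0h.
have -> : P_fun rho (E (r0 + h + h) h) = (hv, rho 0%R + rho hv)%R.
  rewrite /P_fun /E /=; congr (_, _ + _)%R.
  by rewrite -addnA -N_hh -vec_of_mod modnDr vec_of_mod /r0 vec_of_int'.
have R2 := F2 0 h hu; rewrite add0n -N_hh in R2.
move=> R3; have R4 := R_trans R3 (R_sym R2).
set e := (rho 0%R + rho hv)%R in R4.
have : R (E h (int_of e)) (E h N) by rewrite /E vec_of_int'.
move/F1; rewrite -inU_mod negK ?N_gt0 // modnn subn0 modnDr modn_small ?int_of_lt //.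
move=> He; exists (int_of e); split => //.
rewrite modn_small ?int_of_lt //; apply/eqP => /(congr1 (vec_of n)).
rewrite vec_of_int' vec_of0 => e0.
have : rho 0%R = rho hv.
  by move: e0; rewrite /e => e0; apply: (addIr (rho hv)); rewrite e0 F2_addxx.
by move/rho_inj/esym/eqP; rewrite (negbTE hv_neq0).
Qed.


Lemma nzK_of_pair x y : x <> y -> R x y -> exists a, inK a /\ a %% N != 0.
Proof.
move=> nxy; rewrite (vecE x) (vecE y) => /F1.
set A := _ + _; set B := _ + _ => hAB.
have nz : (A %% N != 0) || (B %% N != 0).
  apply: contra_notT nxy; rewrite negb_or !negbK => /andP[/eqP a0 /eqP b0].
  rewrite (vecE x) (vecE y); apply: E_eq; exact: negK_eq N_gt0 _.
pose Pj j := ((2 ^ j * A) %% N != 0) || ((2 ^ j * B) %% N != 0).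
have exP : exists j, Pj j by exists 0; rewrite /Pj expn0 !mul1n.
have ubP : forall j, Pj j -> j <= n.
  move=> j; apply: contraTT; rewrite -ltnNge => nj.
  have dv : N %| 2 ^ j by rewrite dvdn_exp2l // ltnW.
  by rewrite /Pj negb_or !negbK !(eqP (dvdn_mulr _ dv)).
case: (ex_maxnP exP ubP) => j Pjj maxj.
have nP : ~~ Pj j.+1.
  by apply/negP => /maxj; rewrite ltnn.
move: nP; rewrite /Pj negb_or !negbK !expnS -!mulnA => /andP[/eqP c0 /eqP d0].
have hu := inU_mul (2 ^ j) hAB; move/inU_mod: hu => hu.
move: Pjj; rewrite /Pj.
case: (half_cases c0) hu => -> hu; case: (half_cases d0) hu => -> hu.
- by rewrite eqxx.
- by move=> _; exists h; split; [exact: hu | rewrite h_mod expn_eq0].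
- by move=> _; exists h; split; [exact: caseA | rewrite h_mod expn_eq0].
- by move=> _; exact: caseB.
Qed.


Lemma inK_mul t a : inK a -> inK (t * a).
Proof. by move/(inU_mul t); rewrite muln0. Qed.

Lemma desc k : (forall t, inK (t * 2 ^ k)) ->
  exists k', [/\ k' <= k, forall t, inK (t * 2 ^ k') & forall a, inK a -> 2 ^ k' %| a %% N].
Proof.
elim: k => [|k IH] Hk.
  by exists 0; split => // a _; rewrite expn0 dvd1n.
case: (classic (exists a, inK a /\ ~~ (2 ^ k.+1 %| a %% N))); last first.
  move=> nex; exists k.+1; split => // a Ka.
  by apply/negPn/negP => nd; apply: nex; exists a.
case=> a [Ka nd].
have [k' [k'k H1 H2]] : exists k', [/\ k' <= k, forall t, inK (t * 2 ^ k') &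
    forall a, inK a -> 2 ^ k' %| a %% N]; last by exists k'; split => //; apply: leqW.
apply: IH.
have := (proj2 (inU_mod 0 a)) Ka; rewrite mod0n => {}Ka.
move: Ka nd; set a' := a %% N => Ka nd.
have a0 : 0 < a' by rewrite lt0n; apply: contraNneq nd => ->; rewrite dvdn0.
pose Pj j := 2 ^ j %| a'.
have exP : exists j, Pj j by exists 0; rewrite /Pj expn0 dvd1n.
have ubP : forall j, Pj j -> j <= a'.
  move=> j /(dvdn_leq a0) le; apply: ltnW; apply: leq_trans le; exact: ltn_expl.
case: (ex_maxnP exP ubP) => j Pjj maxj.
have jk : j <= k.
  rewrite leqNgt; apply/negP => kj; apply: (negP nd).
  apply: dvdn_trans Pjj; exact: dvdn_exp2l.
set o := a' %/ 2 ^ j.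
have eo : a' = o * 2 ^ j by rewrite divnK.
have oo : odd o.
  apply/negPn/negP => eo2.
  have : Pj j.+1.
    by rewrite /Pj eo -(even_halfK eo2) -muln2 -mulnA -expnS dvdn_mull.
  by move/maxj; rewrite ltnn.
have Kb : inK (o * 2 ^ k).
  have -> : o * 2 ^ k = 2 ^ (k - j) * a' by rewrite eo mulnCA -expnD subnK.
  exact: inK_mul.
move=> t; case: (boolP (odd t)) => ot; last first.
  have -> : t * 2 ^ k = t./2 * 2 ^ k.+1 by rewrite expnS mulnA muln2 even_halfK.
  exact: Hk.
apply: (inU_cancel Kb); rewrite addn0.
have ev : ~~ odd (o * 2 ^ k + t * 2 ^ k) by rewrite -mulnDl oddM oddD oo ot.
have -> : o * 2 ^ k + t * 2 ^ k = (o + t)./2 * 2 ^ k.+1.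
  by rewrite expnS mulnA muln2 even_halfK ?mulnDl // oddD oo ot.
exact: Hk.
Qed.


Lemma K_structure : (exists a, inK a /\ a %% N != 0) ->
  exists k, [/\ k < n, forall t, inK (t * 2 ^ k) & forall a, inK a -> 2 ^ k %| a %% N].
Proof.
case=> a0 [Ka0 a0nz].
have [k [kn H1 H2]] := desc (k := n) (fun t => proj1 (inU_mod _ _) (eq_ind_r (fun z => inU z _) (eq_ind_r (fun z => inU 0 z) inU0 (modnMl t N)) (mod0n N))).
exists k; split => //.
have := H2 _ Ka0 => /(dvdn_leq _); rewrite lt0n a0nz => /(_ isT) le.
have : 2 ^ k < 2 ^ n by apply: leq_ltn_trans le _; rewrite ltn_mod N_gt0.
by rewrite ltn_exp2l.
Qed.

Lemma RK_all (HK : forall a, inK a) (c p q : Vn) : R (c, p) (c, q).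
Proof.
have H : forall p : Vn, R (c, p) (c, 0%R).
  move=> p'; have := F2 (int_of c) 0 (HK (int_of p')).
  by rewrite /E add0n addn0 !vec_of_int' vec_of0.
exact: R_trans (H p) (R_sym (H q)).
Qed.

Lemma all_R (HK : forall a, inK a) x y : R x y.
Proof.
case: x y => p q [p' q'].
have := R_P (RK_all HK (q + rho p)%R p p'); rewrite /P_fun /= -addrA F2_addxx addr0.
move=> H; apply: R_trans H _; exact: RK_all.
Qed.

Lemma inU_of_inK d : inK d -> inU d 0.
Proof.
move=> Kd; have := F2 (int_of z0) 0 Kd; rewrite addn0 add0n => /R_Pinv.
rewrite /Pinv_fun /E /= !vec_of_int' rho_z0 !addr0 vec_of0.
rewrite -(vec_of0 n) -[z0]vec_of_int' -/(E d (int_of z0)) -/(E 0 (int_of z0)).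
move/F1; rewrite mod0n subn0 -inU_mod modnDr negK ?N_gt0 //.
by move=> H; apply: (proj1 (inU_mod d 0)); rewrite mod0n.
Qed.

Lemma cong k d (x2 : Vn) : (forall a, inK a -> 2 ^ k %| a %% N) -> k <= n -> inK d ->
  int_of (rho (vec_of n (int_of x2 + d))) %% 2 ^ k = int_of (rho x2) %% 2 ^ k.
Proof.
move=> Ksub kn Kd; set i2 := int_of x2.
have := F2 0 i2 Kd; rewrite add0n => /R_P.
rewrite /P_fun /E /= vec_of0 !add0r (vec_of_int' x2).
set r1 := int_of (rho (vec_of n (i2 + d))).
set r2 := int_of (rho x2).
have -> : (vec_of n (i2 + d), rho (vec_of n (i2 + d))) = E (i2 + d) r1 by rewrite /E /r1 vec_of_int'.
have -> : (x2, rho x2) = E i2 r2 by rewrite /E /r2 /i2 !vec_of_int'.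
move=> H.
have H' := F2 i2 r2 (inU_of_inK Kd); rewrite addn0 in H'.
have H3 := proj2 (inU_mod _ _) (F1 (R_trans H (R_sym H'))).
have r2N : r2 < N by apply: int_of_lt.
clearbody r1 r2.
rewrite (negK (i2 + d) N_gt0) in H3.
move: (Ksub _ H3); rewrite modn_mod.
have dkN : 2 ^ k %| N by apply: dvdn_exp2l.
rewrite /dvdn modn_dvdm // => /eqP e.
rewrite (modn_small r2N) in e.
have : (r1 + (N - r2) + r2) %% 2 ^ k = r2 %% 2 ^ k by rewrite -modnDml e add0n.
rewrite -addnA subnK ?(ltnW r2N) // => <-.
have -> : N = 2 ^ (n - k) * 2 ^ k by rewrite -expnD subnK.
by rewrite addnC modnMDl.
Qed.

Local Notation cs k x := (@bcoset delta m k x).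

Section Cosets.
Variable k : nat.
Hypothesis kn : k <= n.
Hypothesis Pk : forall t, inK (t * 2 ^ k).
Hypothesis Ksub : forall a, inK a -> 2 ^ k %| a %% N.

Lemma dkN : 2 ^ k %| N.
Proof. exact: dvdn_exp2l. Qed.

Lemma coset_rho x : rho @: cs k x \subset cs k (rho x).
Proof.
apply/subsetP => _ /imsetP [y yC ->]; rewrite inE.
move: yC; rewrite inE => /eqP yC.
have xN : int_of x < N by apply: int_of_lt.
have le : int_of x <= int_of y + N by apply: leq_trans (ltnW xN) (leq_addl _ _).
have dv : 2 ^ k %| int_of y + N - int_of x.
  rewrite -eqn_mod_dvd // -modnDm (eqP dkN) addn0 modn_mod yC.
  by [].
set t := (int_of y + N - int_of x) %/ 2 ^ k.
have ey : vec_of n (int_of x + t * 2 ^ k) = y.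
  by rewrite /t divnK // subnKC // -vec_of_mod modnDr vec_of_mod vec_of_int'.
by rewrite -ey (cong _ Ksub kn (Pk t)) eqxx.
Qed.

Lemma coset_card x y : #|cs k x| <= #|cs k y|.
Proof.
set c := int_of y + N - int_of x.
pose f (z : Vn) := vec_of n (int_of z + c).
have finj : injective f.
  move=> z z' /vec_of_eq /eqP; rewrite eqn_modDr !modn_small ?int_of_lt //.
  by move/eqP/int_of_inj.
rewrite -(card_imset _ finj); apply: subset_leq_card; apply/subsetP => _ /imsetP [z zC ->].
move: zC; rewrite !inE /f int_of_vec modn_dvdm ?dkN // => /eqP zC.
have xN : int_of x < N by apply: int_of_lt.
rewrite -modnDml zC modnDml /c addnC subnK; last by apply: leq_trans (ltnW xN) (leq_addl _ _).
by rewrite -modnDm (eqP dkN) addn0 modn_mod.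
Qed.

Lemma coset_image x : rho @: cs k x = cs k (rho x).
Proof.
apply/eqP; rewrite eqEcard coset_rho card_imset; last exact: rho_inj.
exact: coset_card.
Qed.


Lemma final_contra : 0 < k -> k < n -> False.
Proof.
move=> k0 kn'.
set D := parallel_sbox g @: cs k 0%R.
have HD : has_type D (std_type delta (k %/ m) (k %% m != 0)).
  exact: sbox_type (@coset_type delta m hm k 0%R k0 kn').
have HL : image_lin L D = cs k (rho 0%R).
  rewrite /image_lin /D -imset_comp -coset_image.
  by apply: eq_imset.
have m0 : 0 < m by apply: ltnW.
have a_lt : k %/ m < delta by rewrite ltn_divLR.
have b1 : (k %% m != 0) <= 1 by case: (k %% m != 0).
apply: (hLntp (c := delta - k %/ m - (k %% m != 0)) b1 _ _ _ HD); rewrite ?HL.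
- by move: a_lt b1; lia.
- by move=> e; rewrite e ltnn in a_lt.
- move=> e.
  have : k %/ m = 0 /\ (k %% m != 0) = false.
    by move: e; case: (k %% m != 0) => /=; lia.
  case=> q0 /negbFE/eqP r0.
  by move: k0; rewrite (divn_eq k m) q0 r0.
exact: (@coset_type delta m hm k (rho 0%R) k0 kn').
Qed.
End Cosets.

Lemma no_imprim : 1 < #|Q| -> #|Q| < #|[set: V]| -> False.
Proof.
move=> c1 c2.
have [/eqP cov tI nz0] := and3P hQp.
have [x [y [nxy Rxy]]] : exists x y, x <> y /\ R x y.
  apply: NNPP => H.
  have inj : injective (pblock Q).
    move=> x y e; apply: NNPP => nxy; apply: H; exists x, y; split => //.
  have : #|[set: V]| <= #|Q|.
    rewrite -(card_imset _ inj); apply: subset_leq_card; apply/subsetP => _ /imsetP [z _ ->].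
    by apply: pblock_mem; rewrite cov inE.
  by rewrite leqNgt c2.
have [k [kn Pk Ksub]] := K_structure (nzK_of_pair nxy Rxy).
case: (posnP k) => [k0|k0].
  move: c1 => /card_gt1P [B1 [B2 [B1Q B2Q nB]]].
  have : B1 != set0 by apply: contraNneq nz0 => <-.
  case/set0Pn => x1 x1B.
  have : B2 != set0 by apply: contraNneq nz0 => <-.
  case/set0Pn => x2 x2B.
  have : R x1 x2 by apply: all_R => a; have := Pk a; rewrite k0 expn0 muln1.
  by rewrite /R (def_pblock tI B1Q x1B) (def_pblock tI B2Q x2B) => e; rewrite e eqxx in nB.
exact: (final_contra (ltnW kn) Pk Ksub k0 kn).
Qed.

End Main.

Section Trans.
Variables (m delta : nat) (g : 'I_delta -> {perm 'rV['F_2]_m}) (L : 'M['F_2]_(delta * m)).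

Lemma Gam_trans :
  [transitive @Gamma_infty delta m (fun x => (parallel_sbox g x *m L)%R),
     on [set: 'rV['F_2]_(delta * m) * 'rV['F_2]_(delta * m)] | 'P].
Proof.
apply/imsetP; exists (0%R, 0%R) => //; apply/setP => y; rewrite inE; apply/esym/orbitP.
exists (sigma y); first exact: (@sigma_in m delta g L).
rewrite [LHS]apermE permE /sigma_fun /=.
have H : forall z : 'rV['F_2]_(delta * m), boxplus 0%R z = z.
  by move=> z; rewrite -{2}(vec_of_int' z) -(vec_of0 (delta * m)) -{1}(vec_of_int' z) boxplus_vec add0n.
by rewrite !H; case: y.
Qed.
End Trans.


Theorem mainTheorem3 (m delta : nat) (hm : (1 < m)%N) (hdelta : (1 < delta)%N)
    (g : 'I_delta -> {perm 'rV['F_2]_m})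
    (hg : forall j : 'I_delta, g j 0%R != 0%R)
    (L : 'M['F_2]_(delta * m))
    (hLinv : L \in unitmx)
    (hLntp : non_type_preserving L) :
  [primitive @Gamma_infty delta m (fun x => (parallel_sbox g x *m L)%R),
     on [set: 'rV['F_2]_(delta * m) * 'rV['F_2]_(delta * m)] | 'P].
Proof.
apply/andP; split; first exact: Gam_trans.
apply/negP => /existsP [Q /and3P [hQp hQa /andP [c1 c2]]].
exact: (no_imprim hm hdelta hLinv hLntp hQp hQa c1 c2).
Qed.
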